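(* Let $\mathfrak A$ be a pseudo left Hilbert algebra. Then $\mathfrak A^2=\mathrm{span}\{\xi\eta:\xi,\eta\in\mathfrak A\}$, with the restricted product, involution and inner product, is a left Hilbert algebra. Moreover, for all $\xi\in\mathfrak A$ and $\eta\in(\mathfrak A^2)^\perp$ (orthogonal complement in $\overline{\mathfrak A}$) one has $\xi\eta:=\pi_l(\xi)\eta=0$; and if in addition $\eta\in\mathfrak A$, then also $\eta\xi=0$.
   Context: Inner products are linear in the second variable. A pseudo left Hilbert algebra is a complex associative algebra $\mathfrak A$ with an antilinear involution $S:\mathfrak A\to\mathfrak A$ ($S^2=\mathrm{id}$, $S(\xi\eta)=S(\eta)S(\xi)$) and an inner product $\langle\cdot,\cdot\rangle$ such that: (1) for each $\xi\in\mathfrak A$ the left multiplication $\pi_l(\xi):\eta\mapsto\xi\eta$ is bounded; (2) $\langle\xi\eta,\zeta\rangle=\langle\eta,(S\xi)\zeta\rangle$ for all $\xi,\eta,\zeta\in\mathfrak A$; (3) $S$ is closable as an operator on the Hilbert space completion $\overline{\mathfrak A}$. It is a left Hilbert algebra if moreover $\mathfrak A^2=\mathrm{span}\{\xi\eta:\xi,\eta\in\mathfrak A\}$ is dense in $\overline{\mathfrak A}$. The closure of $S$ is again denoted $S$, with domain $D(S)$; $\pi_l(\xi)$ also denotes the bounded extension to $\overline{\mathfrak A}$. *)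

(* Defs.v *)
From mathcomp Require Import all_boot all_order all_algebra.
From mathcomp Require Import reals complex.
Set Implicit Arguments. Unset Strict Implicit. Unset Printing Implicit Defensive.
Import Order.TTheory GRing.Theory Num.Theory.
Local Open Scope ring_scope.

Section PLHA.
Variable R : realType.
Local Notation C := (R[i]).
Variable H : lmodType C.
Variable ip : H -> H -> C.

(* complex inner product, linear in the second variable, antilinear in the first *)
Definition inner_product : Prop :=
  [/\ forall (a : C) x y z, ip x (a *: y + z) = a * ip x y + ip x z,
      forall x y, ip y x = (ip x y)^*,
      forall x, 0 <= ip x x &
      forall x, ip x x = 0 -> x = 0].

Definition hnorm (x : H) : R := Num.sqrt (complex.Re (ip x x)).

Definition hcvg (u : nat -> H) (l : H) : Prop :=
  forall e : R, 0 < e -> exists N : nat, forall n, (N <= n)%N -> hnorm (u n - l) < e.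

Definition hcauchy (u : nat -> H) : Prop :=
  forall e : R, 0 < e -> exists N : nat,
    forall m n, (N <= m)%N -> (N <= n)%N -> hnorm (u m - u n) < e.

Definition hcomplete : Prop := forall u, hcauchy u -> exists l, hcvg u l.

(* closure of a subset of H; for B a subspace of the Hilbert space H this is
   (a realization of) the Hilbert space completion of B *)
Definition hclosure (B : H -> Prop) : H -> Prop :=
  fun x => exists u : nat -> H, (forall n, B (u n)) /\ hcvg u x.

Definition orth (B : H -> Prop) : H -> Prop :=
  fun x => forall y, B y -> ip y x = 0.

Definition subspace (B : H -> Prop) : Prop :=
  B 0 /\ forall (a : C) x y, B x -> B y -> B (a *: x + y).

Definition sq (B : H -> Prop) (mult : H -> H -> H) : H -> Prop :=
  fun z => exists (n : nat) (c : 'I_n -> C) (u v : 'I_n -> H),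
    (forall i, B (u i)) /\ (forall i, B (v i)) /\
    z = \sum_(i < n) c i *: mult (u i) (v i).

(* B (subset of H, with product mult and involution S defined on B) is a
   pseudo left Hilbert algebra, its completion being realized as the
   closure of B in H *)
Definition pseudo_left_Hilbert_algebra (B : H -> Prop) (mult : H -> H -> H)
    (S : H -> H) : Prop :=
  [/\ subspace B,
      [/\ forall x y, B x -> B y -> B (mult x y),
          forall x y z, B x -> B y -> B z -> mult x (mult y z) = mult (mult x y) z,
          forall (a : C) x y z, B x -> B y -> B z ->
            mult (a *: x + y) z = a *: mult x z + mult y z &
          forall (a : C) x y z, B x -> B y -> B z ->
            mult x (a *: y + z) = a *: mult x y + mult x z],
      [/\ forall x, B x -> B (S x),
          forall (a : C) x y, B x -> B y -> S (a *: x + y) = a^* *: S x + S y,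
          forall x, B x -> S (S x) = x &
          forall x y, B x -> B y -> S (mult x y) = mult (S y) (S x)],
      (forall x, B x -> exists M : R, forall y, B y -> hnorm (mult x y) <= M * hnorm y) &
      ((forall x y z, B x -> B y -> B z -> ip (mult x y) z = ip y (mult (S x) z)) /\
      (* (3) S is closable as an operator on the completion: the closure of its
         graph contains no point (0, w) with w <> 0 *)
      (forall u : nat -> H, forall w, (forall n, B (u n)) ->
          hcvg u 0 -> hcvg (fun n => S (u n)) w -> w = 0))].

Definition left_Hilbert_algebra (B : H -> Prop) (mult : H -> H -> H)
    (S : H -> H) : Prop :=
  pseudo_left_Hilbert_algebra B mult S /\
  (forall x, hclosure B x -> hclosure (sq B mult) x).

(* pil_ext B mult x eta v : the bounded extension of pi_l(x) (left
   multiplication by x on B) to the completion maps eta to v, i.e.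
   x u_n -> v for every sequence u_n in B converging to eta *)
Definition pil_ext (B : H -> Prop) (mult : H -> H -> H) (x eta v : H) : Prop :=
  forall u : nat -> H, (forall n, B (u n)) -> hcvg u eta ->
    hcvg (fun n => mult x (u n)) v.

End PLHA.

(* Main.v *)
Require Import Defs.
From mathcomp Require Import all_boot all_order all_algebra.
From mathcomp Require Import reals complex.
From mathcomp Require Import ring lra.
From Stdlib Require Import ClassicalEpsilon.
From mathcomp Require Import classical_sets.
Set Implicit Arguments. Unset Strict Implicit. Unset Printing Implicit Defensive.
Import Order.TTheory GRing.Theory Num.Theory.
Local Open Scope ring_scope.

Section Hilb.
Variable R : realType.
Local Notation C := (R[i]).
Variable H : lmodType C.
Variable ip : H -> H -> C.
Hypothesis hip : inner_product ip.

Lemma ip0r x : ip x 0 = 0.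
Proof.
case: hip => lin _ _ _.
have := lin 1 x 0 0; rewrite scale1r addr0 mul1r => h.
by apply/(addrI (ip x 0)); rewrite addr0 -h.
Qed.

Lemma ipDr x y z : ip x (y + z) = ip x y + ip x z.
Proof. by case: hip => lin _ _ _; rewrite -{1}[y]scale1r lin mul1r. Qed.

Lemma ipZr x a y : ip x (a *: y) = a * ip x y.
Proof. by case: hip => lin _ _ _; rewrite -[a *: y]addr0 lin ip0r addr0. Qed.

Lemma ipC x y : ip y x = (ip x y)^*.
Proof. by case: hip. Qed.

Lemma ipNr x y : ip x (- y) = - ip x y.
Proof. by rewrite -scaleN1r ipZr mulN1r. Qed.

Lemma ipBr x y z : ip x (y - z) = ip x y - ip x z.
Proof. by rewrite ipDr ipNr. Qed.

Lemma ip0l x : ip 0 x = 0.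
Proof. by rewrite ipC ip0r conjC0. Qed.

Lemma conj_ip x y : (ip x y)^* = ip y x.
Proof. by rewrite (ipC x y). Qed.

Lemma ipDl x y z : ip (y + z) x = ip y x + ip z x.
Proof. by rewrite ipC ipDr rmorphD -(conj_ip x y) -(conj_ip x z). Qed.

Lemma ipZl x a y : ip (a *: y) x = a^* * ip y x.
Proof. by rewrite ipC ipZr rmorphM -(conj_ip x y). Qed.

Lemma ipNl x y : ip (- y) x = - ip y x.
Proof. by rewrite ipC ipNr rmorphN -(conj_ip x y). Qed.

Lemma ipBl x y z : ip (y - z) x = ip y x - ip z x.
Proof. by rewrite ipDl ipNl. Qed.

Lemma ip_ge0 x : 0 <= ip x x.
Proof. by case: hip. Qed.

Lemma ip_eq0 x : ip x x = 0 -> x = 0.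
Proof. by case: hip => _ _ _; apply. Qed.

Definition Nr x : R := complex.Re (ip x x).

Lemma ip_real x : ip x x = ((Nr x)%:C)%C.
Proof.
have := ip_ge0 x; rewrite /Nr; case: (ip x x) => a b.
by rewrite lecE /= => /andP[/eqP -> _].
Qed.

Lemma Nr_ge0 x : 0 <= Nr x.
Proof. by have := ip_ge0 x; rewrite ip_real lecR. Qed.


Lemma ip_neq0 x : x != 0 -> 0 < ip x x.
Proof.
move=> nx; rewrite lt_def ip_ge0 andbT; apply/eqP => /ip_eq0 /eqP.
by rewrite (negbTE nx).
Qed.

Lemma conj_ipxx x : (ip x x)^* = ip x x.
Proof. by apply: conj_Creal; apply: ger0_real; apply: ip_ge0. Qed.

Lemma CS_C x y : `|ip x y| ^+ 2 <= ip x x * ip y y.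
Proof.
have [->|nx] := eqVneq x 0.
  by rewrite ip0l ip0r normr0 expr0n /= mul0r.
have a0 := ip_neq0 nx.
set a := ip x x in a0 *; set c := ip x y.
pose t := c / a; pose w := y - t *: x.
have e : ip w w = ip y y - c * c^* / a.
  rewrite /w ipBl !ipBr !ipZl !ipZr -/a -/c (ipC x y) -/c.
  have ca : a^* = a := conj_ipxx x.
  have tc : t^* = c^* / a^* by rewrite /t rmorphM fmorphV.
  rewrite tc ca.
  have an : a != 0 by rewrite gt_eqF.
  by field.
have := ip_ge0 w; rewrite e subr_ge0 ler_pdivrMr // normCK => h.
rewrite [X in X <= _]mulrC [X in _ <= X]mulrC (mulrC (c^*)); exact h.
Qed.

Definition nc (z : C) : R := complex.Re `|z|.

Lemma nc_real z : `|z| = ((nc z)%:C)%C.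
Proof.
have := normr_ge0 z; rewrite /nc; case: (`|z|) => a b.
by rewrite lecE /= => /andP[/eqP -> _].
Qed.

Lemma nc_ge0 z : 0 <= nc z.
Proof. by have := normr_ge0 z; rewrite nc_real lecR. Qed.

Lemma ncD z w : nc (z + w) <= nc z + nc w.
Proof. by have := ler_normD z w; rewrite !nc_real -rmorphD lecR. Qed.

Lemma ncM z w : nc (z * w) = nc z * nc w.
Proof. by apply: complexI; rewrite rmorphM -!nc_real normrM. Qed.

Lemma ncN z : nc (- z) = nc z.
Proof. by rewrite /nc normrN. Qed.

Lemma nc_eq0 z : nc z = 0 -> z = 0.
Proof. by move=> h; apply/normr0_eq0; rewrite nc_real h. Qed.

Lemma nc0 : nc 0 = 0.
Proof. by rewrite /nc normr0. Qed.

Lemma nc_conj z : nc (z^*) = nc z.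
Proof. by rewrite /nc norm_conjC. Qed.

Lemma Re_le_nc z : complex.Re z <= nc z.
Proof.
rewrite /nc normc_def /=; case: z => a b /=.
apply: le_trans (ler_norm a) _; rewrite -sqrtr_sqr ler_wsqrtr //.
by rewrite lerDl sqr_ge0.
Qed.

Definition hn x := hnorm ip x.

Lemma hn_ge0 x : 0 <= hn x.
Proof. exact: sqrtr_ge0. Qed.

Lemma hn_sqr x : hn x ^+ 2 = Nr x.
Proof. by rewrite /hn /hnorm sqr_sqrtr // Nr_ge0. Qed.

Lemma CS x y : nc (ip x y) <= hn x * hn y.
Proof.
have := CS_C x y; rewrite nc_real !ip_real -!rmorphXn -rmorphM lecR.
rewrite -!hn_sqr -exprMn => h.
by rewrite -(ler_pXn2r (n := 2)) // ?nnegrE ?mulr_ge0 ?hn_ge0 ?nc_ge0.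
Qed.


Lemma Nr_hn x : Nr x = hn x ^+ 2.
Proof. by rewrite hn_sqr. Qed.

Lemma hn_le x y : Nr x <= Nr y -> hn x <= hn y.
Proof. by move=> h; apply: ler_wsqrtr. Qed.

Lemma hnD x y : hn (x + y) <= hn x + hn y.
Proof.
set c := ip x y.
have e : ip (x + y) (x + y) = ip x x + ip y y + (c + c^*).
  rewrite !ipDl !ipDr -/c (ipC x y) -/c.
  ring.
have h1 : c + c^* <= `|c| * 2.
  rewrite -[c + c^*](@divfK _ 2) ?pnatr_eq0 // -ReE.
  by rewrite ler_pM2r ?ltr0n // (leif_Re_Creal c).1.
have h2 : Nr (x + y) <= Nr x + Nr y + nc c * 2.
  rewrite -lecR !rmorphD rmorphM /= -!ip_real -nc_real e lerD2l.
  by rewrite rmorph_nat.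
rewrite -(ler_pXn2r (n := 2)) ?nnegrE ?addr_ge0 ?hn_ge0 //.
rewrite hn_sqr (le_trans h2) // sqrrD -!Nr_hn -mulr_natr.
have := CS x y; rewrite -/c; lra.
Qed.

Lemma NrZ a x : Nr (a *: x) = nc a ^+ 2 * Nr x.
Proof.
apply: complexI; rewrite rmorphM rmorphXn /= -nc_real -!ip_real ipZl ipZr.
by rewrite mulrA -normCKC.
Qed.

Lemma hnZ a x : hn (a *: x) = nc a * hn x.
Proof.
apply/eqP; rewrite -(eqrXn2 (n := 2)) ?mulr_ge0 ?nc_ge0 ?hn_ge0 //.
by rewrite hn_sqr exprMn hn_sqr NrZ.
Qed.

Lemma hnN x : hn (- x) = hn x.
Proof. by rewrite -scaleN1r hnZ ncN /nc normr1 /= mul1r. Qed.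

Lemma hnB x y : hn (x - y) = hn (y - x).
Proof. by rewrite -hnN opprB. Qed.

Lemma hn0 : hn 0 = 0.
Proof. by rewrite /hn /hnorm ip0r /= sqrtr0. Qed.

Lemma hn_eq0 x : hn x = 0 -> x = 0.
Proof.
move=> h; apply: ip_eq0; rewrite ip_real -hn_sqr h expr0n /=; by [].
Qed.

Lemma ip_eq0' x : (forall e : R, 0 < e -> hn x <= e) -> x = 0.
Proof.
move=> h; apply: hn_eq0; apply/eqP; rewrite eq_le hn_ge0 andbT.
by apply/ler_addgt0Pl => e /h; rewrite addr0.
Qed.


Local Notation cvg := (hcvg ip).

Lemma half_gt0 (e : R) : 0 < e -> 0 < e / 2.
Proof. by move=> h; rewrite divr_gt0 ?ltr0n. Qed.

Lemma cvg_unique u l l' : cvg u l -> cvg u l' -> l = l'.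
Proof.
move=> h1 h2; apply/eqP; rewrite -subr_eq0; apply/eqP; apply: ip_eq0' => e e0.
have [N1 hN1] := h1 _ (half_gt0 e0); have [N2 hN2] := h2 _ (half_gt0 e0).
set n := maxn N1 N2.
have a1 := hN1 n (leq_maxl _ _); have a2 := hN2 n (leq_maxr _ _).
have -> : l - l' = (l - u n) + (u n - l') by rewrite addrA subrK.
apply: le_trans (hnD _ _) _; rewrite hnB.
have : hn (u n - l) < e / 2 := a1. have : hn (u n - l') < e / 2 := a2.
lra.
Qed.

Lemma cvg_cauchy u l : cvg u l -> hcauchy ip u.
Proof.
move=> h e e0; have [N hN] := h _ (half_gt0 e0); exists N => m n hm hn'.
have -> : u m - u n = (u m - l) + (l - u n) by rewrite addrA subrK.
apply: le_lt_trans (hnD _ _) _; rewrite (hnB l).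
have : hn (u m - l) < e / 2 := hN m hm. have : hn (u n - l) < e / 2 := hN n hn'.
lra.
Qed.

Lemma cvg_const x : cvg (fun _ => x) x.
Proof. by move=> e e0; exists 0%N => n _; rewrite subrr; have := hn0; rewrite /hn => ->. Qed.

Lemma cvgD u v l m : cvg u l -> cvg v m -> cvg (fun n => u n + v n) (l + m).
Proof.
move=> h1 h2 e e0.
have [N1 hN1] := h1 _ (half_gt0 e0); have [N2 hN2] := h2 _ (half_gt0 e0).
exists (maxn N1 N2) => n hn'.
have a1 := hN1 n (leq_trans (leq_maxl _ _) hn').
have a2 := hN2 n (leq_trans (leq_maxr _ _) hn').
have -> : u n + v n - (l + m) = (u n - l) + (v n - m).
  by rewrite opprD addrACA.
apply: le_lt_trans (hnD _ _) _.
have : hn (u n - l) < e / 2 := a1. have : hn (v n - m) < e / 2 := a2.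
lra.
Qed.

Lemma cvgZ a u l : cvg u l -> cvg (fun n => a *: u n) (a *: l).
Proof.
move=> h e e0.
have k0 : 0 < nc a + 1 by rewrite ltr_pwDr ?ltr01 ?nc_ge0.
have [N hN] := h (e / (nc a + 1)) (divr_gt0 e0 k0).
exists N => n hn'; rewrite -scalerBr.
have : hn (a *: (u n - l)) = nc a * hn (u n - l) := hnZ _ _.
rewrite /hn => ->.
have := hN n hn'; rewrite ltr_pdivlMr // => h3.
apply: le_lt_trans h3; rewrite mulrC ler_wpM2l ?hn_ge0 //.
by rewrite lerDl ler01.
Qed.

Lemma cvg_ext u v l : (forall n, u n = v n) -> cvg u l -> cvg v l.
Proof. by move=> e h eps /h [N hN]; exists N => n; rewrite -e; apply: hN. Qed.

Lemma cvgB u v l m : cvg u l -> cvg v m -> cvg (fun n => u n - v n) (l - m).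
Proof.
move=> h1 h2; have := cvgD h1 (cvgZ (-1) h2); rewrite scaleN1r.
by apply: cvg_ext => n; rewrite scaleN1r.
Qed.

Lemma cvg_to0 u l : cvg u l -> cvg (fun n => u n - l) 0.
Proof. by move=> h; have := cvgB h (cvg_const l); rewrite subrr. Qed.

Lemma cvg_from0 u l : cvg (fun n => u n - l) 0 -> cvg u l.
Proof. by move=> h e /h [N hN]; exists N => n /hN; rewrite subr0. Qed.

Lemma nc_small (z : C) : (forall e : R, 0 < e -> nc z <= e) -> z = 0.
Proof.
move=> h; apply: nc_eq0; apply/eqP; rewrite eq_le nc_ge0 andbT.
by apply/ler_addgt0Pl => e /h; rewrite addr0.
Qed.

Lemma ip_lim a b u w l m : cvg u l -> cvg w m ->
  (forall n, ip a (w n) = ip b (u n)) -> ip a m = ip b l.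
Proof.
move=> hu hw he; apply/eqP; rewrite -subr_eq0; apply/eqP; apply: nc_small => e e0.
set K := hn a + hn b + 1.
have K0 : 0 < K by rewrite /K ltr_pwDr ?ltr01 ?addr_ge0 ?hn_ge0.
have d0 : 0 < e / K by rewrite divr_gt0.
have [N1 hN1] := hu _ d0; have [N2 hN2] := hw _ d0.
set n := maxn N1 N2.
have a1 : hn (u n - l) < e / K := hN1 n (leq_maxl _ _).
have a2 : hn (w n - m) < e / K := hN2 n (leq_maxr _ _).
have -> : ip a m - ip b l = - ip a (w n - m) + ip b (u n - l).
  by rewrite !ipBr he; ring.
apply: le_trans (ncD _ _) _; rewrite ncN.
have c1 := CS a (w n - m); have c2 := CS b (u n - l).
have : hn a * hn (w n - m) <= hn a * (e / K).
  by rewrite ler_wpM2l ?hn_ge0 // ltW.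
have : hn b * hn (u n - l) <= hn b * (e / K).
  by rewrite ler_wpM2l ?hn_ge0 // ltW.
have eK : e = K * (e / K) by rewrite mulrC divfK // gt_eqF.
have := hn_ge0 a; have := hn_ge0 b; have : 0 < e / K := d0.
rewrite /K in eK; nra.
Qed.

Lemma ip_lim0 y u l : cvg u l -> (forall n, ip y (u n) = 0) -> ip y l = 0.
Proof.
move=> hu h.
have := ip_lim (a := 0) (b := y) hu (cvg_const 0).
rewrite ip0l => <- // n; by rewrite ip0l h.
Qed.

Lemma ip_lim0l y u l : cvg u l -> (forall n, ip (u n) y = 0) -> ip l y = 0.
Proof.
move=> hu h; rewrite ipC (ip_lim0 hu) ?conjC0 // => n.
by rewrite ipC h conjC0.
Qed.


Lemma choice_seq (P : nat -> H -> Prop) :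
  (forall n, exists x, P n x) -> exists f : nat -> H, forall n, P n (f n).
Proof.
move=> h; exists (fun n => proj1_sig (constructive_indefinite_description _ (h n))).
by move=> n; case: (constructive_indefinite_description _ _).
Qed.

Local Notation cl := (hclosure ip).

Lemma cl_sub (B : H -> Prop) x : B x -> cl B x.
Proof. by move=> bx; exists (fun _ => x); split => //; apply: cvg_const. Qed.

Lemma cl_lin (B : H -> Prop) a x y : subspace B -> cl B x -> cl B y -> cl B (a *: x + y).
Proof.
move=> [_ sB] [u [hu cu]] [v [hv cv]].
exists (fun n => a *: u n + v n); split; first by move=> n; apply: sB.
exact: cvgD (cvgZ a cu) cv.
Qed.

Lemma inv_small (d : R) : 0 < d -> exists K : nat, forall k, (K <= k)%N -> k.+1%:R^-1 < d.
Proof.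
move=> d0; have [K hK] := ltr_add_invr d0; exists K => k hk.
apply: le_lt_trans _ (hK); rewrite add0r lef_pV2 ?posrE ?ltr0n // ler_nat ltnS //.
Qed.

Lemma cl_cl (B : H -> Prop) x : cl (cl B) x -> cl B x.
Proof.
move=> [xs [hxs cx]].
have : forall k, exists y, B y /\ hn (y - xs k) < k.+1%:R^-1.
  move=> k; have [u [hu cu]] := hxs k.
  have k0 : 0 < k.+1%:R^-1 :> R by rewrite invr_gt0 ltr0n.
  have [N hN] := cu _ k0.
  by exists (u N); split => //; apply: hN.
move/(choice_seq (P := fun k y => B y /\ hn (y - xs k) < k.+1%:R^-1)) => [f hf].
exists f; split; first by move=> n; case: (hf n).
move=> e e0.
have [K1 hK1] := inv_small (half_gt0 e0).
have [K2 hK2] := cx _ (half_gt0 e0).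
exists (maxn K1 K2) => n hn'.
have a1 := hK1 n (leq_trans (leq_maxl _ _) hn').
have a2 : hn (xs n - x) < e / 2 := hK2 n (leq_trans (leq_maxr _ _) hn').
have a3 := (hf n).2.
have -> : f n - x = (f n - xs n) + (xs n - x) by rewrite addrA subrK.
apply: le_lt_trans (hnD _ _) _.
have := lt_trans a3 a1. move: a2. lra.
Qed.


Lemma ip_line x y : x != 0 ->
  ip (y - (ip x y / ip x x) *: x) (y - (ip x y / ip x x) *: x) =
  ip y y - ip x y * (ip x y)^* / ip x x.
Proof.
move=> nx; have a0 := ip_neq0 nx.
set a := ip x x in a0 *; set c := ip x y.
rewrite ipBl !ipBr !ipZl !ipZr -/a -/c (ipC x y) -/c.
have ca : a^* = a := conj_ipxx x.
have tc : (c / a)^* = c^* / a^* by rewrite rmorphM fmorphV.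
rewrite tc ca.
have an : a != 0 by rewrite gt_eqF.
by field.
Qed.

Lemma Nr_line x y : x != 0 ->
  Nr (y - (ip x y / ip x x) *: x) = Nr y - nc (ip x y) ^+ 2 / Nr x.
Proof.
move=> nx; have e := ip_line y nx; rewrite -normCK nc_real in e.
rewrite [X in _ - _ / X]ip_real [ip y y]ip_real [ip (y - _) _]ip_real in e.
apply: complexI; rewrite rmorphB rmorphM fmorphV rmorphXn; exact: e.
Qed.

Lemma parallelogram x y : Nr (x + y) + Nr (x - y) = 2 * Nr x + 2 * Nr y.
Proof.
have e : ip (x + y) (x + y) + ip (x - y) (x - y) = 2 * ip x x + 2 * ip y y.
  rewrite !ipDl ?ipBl !ipDr ?ipBr ?ipNl ?ipNr; ring.
move: e; rewrite !ip_real => e.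
apply: complexI; rewrite !rmorphD !rmorphM rmorph_nat; exact: e.
Qed.

Lemma Nr_double z : Nr (z + z) = 4 * Nr z.
Proof.
have e : ip (z + z) (z + z) = 4 * ip z z by rewrite !ipDl !ipDr; ring.
move: e; rewrite !ip_real => e.
apply: complexI; rewrite rmorphM rmorph_nat; exact: e.
Qed.

Lemma Nr_B x y : Nr (x - y) = Nr (y - x).
Proof. by rewrite !Nr_hn hnB. Qed.

Lemma hn_lt_sq x (e : R) : 0 < e -> Nr x < e ^+ 2 -> hn x < e.
Proof.
move=> e0; rewrite -hn_sqr => h.
by rewrite -(ltr_pXn2r (n := 2)) // ?nnegrE ?hn_ge0 ?ltW.
Qed.

Lemma projection (B : H -> Prop) : hcomplete ip -> subspace B ->
  forall v, exists p q, cl B p /\ orth ip B q /\ v = p + q.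
Proof.
move=> hc [B0 sB] v.
pose E := fun r : R => exists b, B b /\ r = Nr (v - b).
have hlb : has_lbound E by exists 0 => r [b [_ ->]]; apply: Nr_ge0.
have hinf : has_inf E by split => //; exists (Nr (v - 0)); exists 0.
set D := inf E.
have Dle : forall b, B b -> D <= Nr (v - b).
  by move=> b bb; apply: (ge_inf hlb); exists b.
have D0 : 0 <= D by apply: lb_le_inf (hinf.1) _ => r [b [_ ->]]; apply: Nr_ge0.
have : forall n, exists b, B b /\ Nr (v - b) < D + n.+1%:R^-1.
  move=> n; have en : 0 < n.+1%:R^-1 :> R by rewrite invr_gt0 ltr0n.
  by have [r [b [bb ->]] hr] := inf_adherent en hinf; exists b.
move/(choice_seq (P := fun n b => B b /\ Nr (v - b) < D + n.+1%:R^-1)) => [bs hbs].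
have hB n : B (bs n) := (hbs n).1.
have hN n : Nr (v - bs n) < D + n.+1%:R^-1 := (hbs n).2.
have sBZ a x : B x -> B (a *: x) by move=> bx; have := sB a x 0; rewrite addr0; apply.
have sBD x y : B x -> B y -> B (x + y) by move=> bx byy; have := sB 1 x y; rewrite scale1r; apply.
have half : forall s : H, s = (2^-1 : C) *: s + (2^-1 : C) *: s.
  by move=> s; rewrite -scalerDl -[X in X = _]scale1r; congr (_ *: _); field.
have pc m n : Nr (bs m - bs n) <= 2 * m.+1%:R^-1 + 2 * n.+1%:R^-1.
  set b' := (2^-1 : C) *: (bs m + bs n).
  have bb' : B b' by rewrite /b'; apply: sBZ; apply: sBD.
  have e1 : (v - bs m) + (v - bs n) = (v - b') + (v - b').
    have hb : b' + b' = bs m + bs n by rewrite /b' -half.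
    by rewrite addrACA -opprD -hb opprD addrACA.
  have e2 : (v - bs m) - (v - bs n) = bs n - bs m.
    by rewrite opprB addrC addrA subrK.
  have := parallelogram (v - bs m) (v - bs n); rewrite e1 e2 Nr_double (Nr_B (bs n)).
  have := Dle _ bb'; have := hN m; have := hN n.
  move: (m.+1%:R^-1 : R) (n.+1%:R^-1 : R) => em en; lra.
have cb : hcauchy ip bs.
  move=> e e0.
  have d0 : 0 < e ^+ 2 / 4 by rewrite divr_gt0 ?exprn_gt0.
  have [K hK] := inv_small d0; exists K => m n hm hn'.
  apply: (@hn_lt_sq (bs m - bs n) e e0).
  have := pc m n; have := hK m hm; have := hK n hn'.
  move: (m.+1%:R^-1 : R) (n.+1%:R^-1 : R) => em en; lra.
have [p cp] := hc _ cb.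
exists p, (v - p); split; first by exists bs.
split; last by rewrite addrC subrK.
move=> b bb.
have [->|nb] := eqVneq b 0; first by rewrite ip0l.
have Nb0 : 0 < Nr b by have := ip_neq0 nb; rewrite ip_real ltcR.
pose w n := v - bs n.
have cw : cvg w (v - p) := cvgB (cvg_const v) cp.
have key n : nc (ip b (w n)) ^+ 2 / Nr b < n.+1%:R^-1.
  set t := ip b (w n) / ip b b.
  have bt : B (bs n + t *: b) by apply: sBD => //; apply: sBZ.
  have := Dle _ bt; rewrite opprD addrA -/(w n) Nr_line //.
  have := hN n; rewrite -/(w n).
  move: (n.+1%:R^-1 : R) => en; lra.
apply: nc_small => e e0.
have d1 : 0 < (e / 2) ^+ 2 / Nr b by rewrite divr_gt0 ?exprn_gt0 ?half_gt0.
have [K1 hK1] := inv_small d1.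
have hb1 : 0 < hn b + 1 by rewrite ltr_pwDr ?ltr01 ?hn_ge0.
have d2 : 0 < e / 2 / (hn b + 1) by rewrite divr_gt0 ?half_gt0.
have [K2 hK2] := cw _ d2.
set n := maxn K1 K2.
have a1 := hK1 n (leq_maxl _ _).
have a2 : hn (w n - (v - p)) < e / 2 / (hn b + 1) := hK2 n (leq_maxr _ _).
have a3 : nc (ip b (w n)) < e / 2.
  rewrite -(ltr_pXn2r (n := 2)) ?nnegrE ?nc_ge0 ?ltW ?half_gt0 //.
  have := lt_trans (key n) a1; rewrite ltr_pdivrMr // divfK ?gt_eqF //.
have -> : ip b (v - p) = ip b (w n) - ip b (w n - (v - p)) by rewrite [ip b (w n - _)]ipBr; ring.
apply: le_trans (ncD _ _) _; rewrite ncN.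
have := CS b (w n - (v - p)).
have : hn b * hn (w n - (v - p)) <= hn b * (e / 2 / (hn b + 1)).
  by rewrite ler_wpM2l ?hn_ge0 // ltW.
have : hn b * (e / 2 / (hn b + 1)) <= e / 2.
  rewrite mulrA ler_pdivrMr //; have := hn_ge0 b; nra.
move: a3; lra.
Qed.


Lemma sum_closed (P : H -> Prop) : P 0 -> (forall a x y, P x -> P y -> P (a *: x + y)) ->
  forall n (F : 'I_n -> H), (forall i, P (F i)) -> P (\sum_(i < n) F i).
Proof.
move=> P0 Pl; elim=> [|n IH] F hF; first by rewrite big_ord0.
rewrite big_ord_recr /= addrC -[F ord_max]scale1r; apply: Pl => //.
by apply: IH => i.
Qed.

Lemma sum_closedZ (P : H -> Prop) : P 0 -> (forall a x y, P x -> P y -> P (a *: x + y)) ->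
  forall n (c : 'I_n -> C) (F : 'I_n -> H), (forall i, P (F i)) -> P (\sum_(i < n) c i *: F i).
Proof.
move=> P0 Pl n c F hF; apply: sum_closed => // i.
by rewrite -[_ *: _]addr0; apply: Pl.
Qed.

Section Sq.
Variables (B : H -> Prop) (mult : H -> H -> H).

Lemma sq0 : sq B mult 0.
Proof. by exists 0%N, (fun _ => 0), (fun _ => 0), (fun _ => 0); split; [case|split; [case|rewrite big_ord0]]. Qed.

Lemma sq_prod x y : B x -> B y -> sq B mult (mult x y).
Proof.
move=> bx byy; exists 1%N, (fun _ => 1), (fun _ => x), (fun _ => y).
by split => //; split => //; rewrite big_ord1 scale1r.
Qed.

Lemma sq_lin a x y : sq B mult x -> sq B mult y -> sq B mult (a *: x + y).
Proof.
move=> [n1 [c1 [u1 [v1 [hu1 [hv1 ->]]]]]] [n2 [c2 [u2 [v2 [hu2 [hv2 ->]]]]]].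
pose c i := match split i with inl j => a * c1 j | inr k => c2 k end.
pose u i := match split i with inl j => u1 j | inr k => u2 k end.
pose v i := match split i with inl j => v1 j | inr k => v2 k end.
exists (n1 + n2)%N, c, u, v; split; last split.
- by move=> i; rewrite /u; case: (split i).
- by move=> i; rewrite /v; case: (split i).
rewrite big_split_ord /=.
have sl j : split (lshift n2 j) = inl j := unsplitK (inl j).
have sr k : split (rshift n1 k) = inr k := unsplitK (inr k).
congr (_ + _).
  rewrite scaler_sumr; apply: eq_bigr => j _.
  by rewrite /c /u /v sl scalerA.
by apply: eq_bigr => k _; rewrite /c /u /v sr.
Qed.

Lemma sq_subspace : subspace (sq B mult).
Proof. by split; [apply: sq0 | move=> a x y; apply: sq_lin]. Qed.

End Sq.


Section Alg.
Variables (A : H -> Prop) (mult : H -> H -> H) (S : H -> H).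
Hypothesis hc : hcomplete ip.
Hypothesis hd : forall x, hclosure ip A x.
Hypothesis hA : pseudo_left_Hilbert_algebra ip A mult S.

Lemma A_lin a x y : A x -> A y -> A (a *: x + y).
Proof. by case: hA => [[_ h]] _ _ _ _; apply: h. Qed.
Lemma A0 : A 0.
Proof. by case: hA => [[h _]] _ _ _ _. Qed.
Lemma AD x y : A x -> A y -> A (x + y).
Proof. by move=> ax ay; have := A_lin 1 ax ay; rewrite scale1r. Qed.
Lemma AZ a x : A x -> A (a *: x).
Proof. by move=> ax; have := A_lin a ax A0; rewrite addr0. Qed.
Lemma AB x y : A x -> A y -> A (x - y).
Proof. by move=> ax ay; apply: AD => //; rewrite -scaleN1r; apply: AZ. Qed.
Lemma mA x y : A x -> A y -> A (mult x y).
Proof. by case: hA => _ [h _ _ _] _ _ _; apply: h. Qed.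
Lemma massoc x y z : A x -> A y -> A z -> mult x (mult y z) = mult (mult x y) z.
Proof. by case: hA => _ [_ h _ _] _ _ _; apply: h. Qed.
Lemma mlinl a x y z : A x -> A y -> A z -> mult (a *: x + y) z = a *: mult x z + mult y z.
Proof. by case: hA => _ [_ _ h _] _ _ _; apply: h. Qed.
Lemma mlinr a x y z : A x -> A y -> A z -> mult x (a *: y + z) = a *: mult x y + mult x z.
Proof. by case: hA => _ [_ _ _ h] _ _ _; apply: h. Qed.
Lemma SA x : A x -> A (S x).
Proof. by case: hA => _ _ [h _ _ _] _ _; apply: h. Qed.
Lemma Slin a x y : A x -> A y -> S (a *: x + y) = a^* *: S x + S y.
Proof. by case: hA => _ _ [_ h _ _] _ _; apply: h. Qed.
Lemma SS x : A x -> S (S x) = x.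
Proof. by case: hA => _ _ [_ _ h _] _ _; apply: h. Qed.
Lemma Smul x y : A x -> A y -> S (mult x y) = mult (S y) (S x).
Proof. by case: hA => _ _ [_ _ _ h] _ _; apply: h. Qed.
Lemma bnd x : A x -> exists M : R, forall y, A y -> hnorm ip (mult x y) <= M * hnorm ip y.
Proof. by case: hA => _ _ _ h _; apply: h. Qed.
Lemma ip2 x y z : A x -> A y -> A z -> ip (mult x y) z = ip y (mult (S x) z).
Proof. by case: hA => _ _ _ _ [h _]; apply: h. Qed.
Lemma closS (u : nat -> H) w : (forall n, A (u n)) -> hcvg ip u 0 -> hcvg ip (fun n => S (u n)) w -> w = 0.
Proof. by case: hA => _ _ _ _ [_ h]; apply: h. Qed.

Lemma mult0r x : A x -> mult x 0 = 0.
Proof.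
move=> ax; have := mlinr 1 ax A0 A0; rewrite !scale1r addr0 => h.
by apply/(addrI (mult x 0)); rewrite addr0 -h.
Qed.

Lemma mult0l x : A x -> mult 0 x = 0.
Proof.
move=> ax; have := mlinl 1 A0 A0 ax; rewrite !scale1r addr0 => h.
by apply/(addrI (mult 0 x)); rewrite addr0 -h.
Qed.

Lemma multBr x y z : A x -> A y -> A z -> mult x (y - z) = mult x y - mult x z.
Proof.
move=> ax ay az; rewrite addrC -scaleN1r mlinr // scaleN1r addrC //.
Qed.

Lemma S0 : S 0 = 0.
Proof.
have := Slin 1 A0 A0; rewrite !scale1r addr0 rmorph1 scale1r => h.
by apply/(addrI (S 0)); rewrite addr0 -h.
Qed.

Lemma sum_inA n (c : 'I_n -> C) (F : 'I_n -> H) : (forall i, A (F i)) -> A (\sum_(i < n) c i *: F i).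
Proof. by apply: sum_closedZ; [apply: A0 | move=> *; apply: A_lin]. Qed.

Lemma sqA z : sq A mult z -> A z.
Proof. by move=> [n [c [u [v [hu [hv ->]]]]]]; apply: sum_inA => i; apply: mA. Qed.

Lemma mult_sum x n (c : 'I_n -> C) (F : 'I_n -> H) : A x -> (forall i, A (F i)) ->
  mult x (\sum_(i < n) c i *: F i) = \sum_(i < n) c i *: mult x (F i).
Proof.
move=> ax; elim: n c F => [|n IH] c F hF; first by rewrite !big_ord0 mult0r.
rewrite !big_ord_recr /= addrC mlinr //; last by apply: sum_inA => i.
by rewrite IH // addrC.
Qed.

Lemma S_sum n (c : 'I_n -> C) (F : 'I_n -> H) : (forall i, A (F i)) ->
  S (\sum_(i < n) c i *: F i) = \sum_(i < n) (c i)^* *: S (F i).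
Proof.
elim: n c F => [|n IH] c F hF; first by rewrite !big_ord0 S0.
rewrite !big_ord_recr /= addrC Slin //; last by apply: sum_inA => i.
by rewrite IH // addrC.
Qed.

Lemma sqS z : sq A mult z -> sq A mult (S z).
Proof.
move=> [n [c [u [v [hu [hv ->]]]]]].
exists n, (fun i => (c i)^*), (fun i => S (v i)), (fun i => S (u i)).
split; first by move=> i; apply: SA.
split; first by move=> i; apply: SA.
rewrite S_sum; last by move=> i; apply: mA.
by apply: eq_bigr => i _; rewrite Smul.
Qed.


Lemma orthA z : (forall y, A y -> ip y z = 0) -> z = 0.
Proof.
move=> h; apply: ip_eq0; have [u [hu cu]] := hd z.
by apply: (ip_lim0l cu) => n; apply: h.
Qed.

Lemma partA xi eta u : A xi -> orth ip (sq A mult) eta ->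
  (forall n, A (u n)) -> hcvg ip u eta -> hcvg ip (fun n => mult xi (u n)) 0.
Proof.
move=> axi oe hu cu.
have [M hM] := bnd axi.
set M' := `|M| + 1.
have M'0 : 0 < M' by rewrite /M' ltr_pwDr ?ltr01.
have hb y : A y -> hn (mult xi y) <= M' * hn y.
  move=> ay; apply: le_trans (hM y ay) _; rewrite ler_wpM2r ?hn_ge0 //.
  by rewrite /M' (le_trans (ler_norm M)) // lerDl ler01.
have cc : hcauchy ip (fun n => mult xi (u n)).
  move=> e e0; have [N hN] := cvg_cauchy cu (divr_gt0 e0 M'0).
  exists N => m n hm hn'; rewrite -multBr //.
  apply: le_lt_trans (hb _ (AB (hu m) (hu n))) _.
  by rewrite mulrC -ltr_pdivlMr // hN.
have [v cv] := hc cc.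
have v0 : v = 0.
  apply: orthA => a aa.
  have sxa : sq A mult (mult (S xi) a) by apply: sq_prod => //; apply: SA.
  rewrite (ip_lim (b := mult (S xi) a) cu cv) ?oe // => n.
  have hun := hu n; rewrite ip2 ?SS //; by try apply: SA.
by rewrite -v0.
Qed.

Lemma partB xi eta : A xi -> orth ip (sq A mult) eta -> A eta -> mult eta xi = 0.
Proof.
move=> axi oe ae.
have step x : A x -> mult x eta = 0.
  move=> ax; apply: orthA => y ay.
  have sx := SA ax.
  rewrite -{1}(SS ax) -ip2 //; apply: oe; exact: sq_prod.
have s2 := step _ (SA ae).
have me := mA ae axi; have se := SA ae.
apply: ip_eq0; rewrite ip2 // massoc // s2 mult0l // ip0r //.
Qed.

Lemma lemG w b : A w -> A b -> exists ps : nat -> H,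
  (forall n, sq A mult (ps n)) /\ hcvg ip (fun n => mult w (ps n)) (mult w b).
Proof.
move=> aw ab.
have [p [q [[ps [hps cps]] [oq eb]]]] := projection hc (sq_subspace A mult) b.
exists ps; split => //.
have aps n : A (ps n) by apply: sqA.
have hu n : A (b - ps n) by apply: AB.
have cu : hcvg ip (fun n => b - ps n) q.
  by have := cvgB (cvg_const b) cps; rewrite eb [p + q]addrC addrK.
have h0 := partA aw oq hu cu.
have := cvgB (cvg_const (mult w b)) h0; rewrite subr0.
apply: cvg_ext => n.
by rewrite multBr // opprB addrC subrK.
Qed.


Lemma dens x : hclosure ip (sq A mult) x -> hclosure ip (sq (sq A mult) mult) x.
Proof.
set K := hclosure ip (sq (sq A mult) mult).
have K0 : K 0 by apply: cl_sub; apply: sq0.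
have Kl a y z : K y -> K z -> K (a *: y + z) by apply: cl_lin; apply: sq_subspace.
have Ks n (c : 'I_n -> C) F : (forall i, K (F i)) -> K (\sum_(i < n) c i *: F i).
  by apply: sum_closedZ.
have st1 w b : sq A mult w -> A b -> K (mult w b).
  move=> sw ab; have [ps [hps cps]] := lemG (sqA sw) ab.
  exists (fun n => mult w (ps n)); split => // n; exact: sq_prod.
have st2 u v : A u -> A v -> K (mult u v).
  move=> au av; have [ps [hps cps]] := lemG au av.
  apply: cl_cl; exists (fun n => mult u (ps n)); split => // n.
  have [m [c [a [b [ha [hb ->]]]]]] := hps n.
  rewrite mult_sum //; last by move=> i; apply: mA.
  have -> : \sum_(i < m) c i *: mult u (mult (a i) (b i)) =
            \sum_(i < m) c i *: mult (mult u (a i)) (b i).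
    by apply: eq_bigr => i _; rewrite massoc.
  by apply: Ks => i; apply: st1 => //; apply: sq_prod.
move=> [xs [hxs cxs]]; apply: cl_cl; exists xs; split => // n.
have [m [c [a [b [ha [hb ->]]]]]] := hxs n.
by apply: Ks => i; apply: st2.
Qed.

Lemma sq_plha : pseudo_left_Hilbert_algebra ip (sq A mult) mult S.
Proof.
split.
- exact: sq_subspace.
- split.
  + by move=> x y sx sy; apply: sq_prod; apply: sqA.
  + by move=> x y z sx sy sz; apply: massoc; apply: sqA.
  + by move=> a x y z sx sy sz; apply: mlinl; apply: sqA.
  + by move=> a x y z sx sy sz; apply: mlinr; apply: sqA.
- split.
  + exact: sqS.
  + by move=> a x y sx sy; apply: Slin; apply: sqA.
  + by move=> x sx; apply: SS; apply: sqA.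
  + by move=> x y sx sy; apply: Smul; apply: sqA.
- move=> x sx; have [M hM] := bnd (sqA sx); exists M => y sy; apply: hM; exact: sqA.
- split.
  + by move=> x y z sx sy sz; apply: ip2; apply: sqA.
  + by move=> u w hu; apply: closS => n; apply: sqA.
Qed.

End Alg.

End Hilb.

Unset Implicit Arguments.

Theorem mainTheorem1 (R : realType) (H : lmodType R[i]) (ip : H -> H -> R[i])
    (A : H -> Prop) (mult : H -> H -> H) (S : H -> H) :
  inner_product ip -> hcomplete ip ->
  (forall x, hclosure ip A x) ->
  pseudo_left_Hilbert_algebra ip A mult S ->
  left_Hilbert_algebra ip (sq A mult) mult S /\
  (forall xi eta, A xi -> orth ip (sq A mult) eta ->
     pil_ext ip A mult xi eta 0 /\ (A eta -> mult eta xi = 0)).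
Proof.
move=> hip hc hd hA; split.
  split; [exact: sq_plha | move=> x; exact: (dens hip hc hd hA)].
move=> xi eta axi oe; split.
  by move=> u hu cu; exact: (partA hip hc hd hA axi oe hu cu).
by move=> ae; exact: (partB hip hd hA axi oe ae).
Qed.
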